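(* Let $k\ge2$, let $R\subset\mathbb{N}^k$ be a simple region, and let $n$ be such that $S_n^{\mathbb{N}}$ contains both accessible points (points of $R_n$) and boundary points (points of $B_n$). Then for every nonempty collection $C_n\subset B_n$ there exist a point $\bar y\in C_n$ and a $(k-2)$-dimensional affine subspace $\pi_{\bar y}$ of the hyperplane $\{x\in\mathbb{R}^k: x_1+\cdots+x_k=n\}$ such that: (1) $\bar y\in\pi_{\bar y}$; (2) $\pi_{\bar y}$ is given by the two equations $L(x)=m_1x_1+\cdots+m_kx_k=b$ and $x_1+\cdots+x_k=n$, where $b\in\mathbb{N}$ and all $m_i\in\mathbb{N}$, with at least one $m_i$ equal to $0$ and at least one $m_i$ nonzero; (3) $L(x)\ge b+1$ for every $x\in R_n$; (4) $L(y)\ge b+1$ for every $y\in C_n$ with $y\neq\bar y$.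
   Context: For $n\in\mathbb{N}$, $S_n\subset\mathbb{R}^k$ is the set of points with nonnegative coordinates summing to $n$, and $S_n^{\mathbb{N}}=S_n\cap\mathbb{N}^k$. For a region $R\subset\mathbb{N}^k$, its boundary $B$ is the set of points not in $R$ that can be reached in one step (by adding a standard unit vector $e_i$) from a point of $R$. Set $R_n=R\cap S_n^{\mathbb{N}}$ (accessible points of order $n$), $B_n=B\cap S_n^{\mathbb{N}}$ (boundary points of order $n$); points of $S_n^{\mathbb{N}}\setminus R_n$ are inaccessible. $R$ is simple if for every $n$ the convex hull of $R_n$ in $\mathbb{R}^k$ contains no inaccessible point of order $n$. *)

(* Defs.v *)
From HB Require Import structures.
From mathcomp Require Import all_boot all_order all_algebra.
From mathcomp Require Import reals.
Set Implicit Arguments. Unset Strict Implicit. Unset Printing Implicit Defensive.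
Import Order.TTheory GRing.Theory Num.Theory.

Definition point (k : nat) := {ffun 'I_k -> nat}.

Definition ord_pt k (x : point k) : nat := \sum_(i < k) x i.

Definition step k (x : point k) (i : 'I_k) : point k :=
  [ffun j => x j + (j == i)].

Definition region k := point k -> Prop.

Definition boundary k (R : region k) : region k :=
  fun x => ~ R x /\ exists y i, R y /\ x = step y i.

Definition level k (R : region k) (n : nat) : region k :=
  fun x => R x /\ ord_pt x = n.

Definition in_hull (F : realType) k (A : region k) (z : 'I_k -> F) : Prop :=
  exists (s : seq (point k)) (w : point k -> F),
    (forall p, p \in s -> A p) /\
    (forall p, 0 <= w p)%R /\
    (\sum_(p <- s) w p = 1)%R /\
    forall i, z i = (\sum_(p <- s) w p * (p i)%:R)%R.

Definition simple_region (F : realType) k (R : region k) : Prop :=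
  forall (n : nat) (x : point k), ord_pt x = n -> ~ R x ->
    ~ in_hull (level R n) (fun i => ((x i)%:R : F)%R).

Definition linf k (m : 'I_k -> nat) (x : point k) : nat := \sum_(i < k) m i * x i.

(* Main.v *)
Require Import Defs.
From mathcomp Require Import all_boot all_order all_algebra.
From mathcomp Require Import reals boolp ring lra.
Import Order.TTheory GRing.Theory Num.Theory.
Set Implicit Arguments. Unset Strict Implicit. Unset Printing Implicit Defensive.
Local Open Scope ring_scope.

Definition dot k (a b : 'I_k -> rat) : rat := \sum_i a i * b i.

Lemma dot_linl k (a b : rat) (x y v : 'I_k -> rat) :
  dot (fun i => a * x i + b * y i) v = a * dot x v + b * dot y v.
Proof. by rewrite /dot !mulr_sumr -big_split; apply: eq_bigr => i _ /=; ring. Qed.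

Lemma dot_linr k (a b : rat) (x y v : 'I_k -> rat) :
  dot v (fun i => a * x i + b * y i) = a * dot v x + b * dot v y.
Proof. by rewrite /dot !mulr_sumr -big_split; apply: eq_bigr => i _ /=; ring. Qed.

Lemma large (T : eqType) (s : seq T) (a b : T -> rat) :
  (forall x, x \in s -> 0 < a x) ->
  exists t, 0 <= t /\ forall x, x \in s -> 0 < t * a x + b x.
Proof.
elim: s => [|x s IH] H; first by exists 0; split.
have [t [t0 Ht]] : exists t, 0 <= t /\ forall x, x \in s -> 0 < t * a x + b x.
  by apply: IH => y ys; apply: H; rewrite inE ys orbT.
have ax := H x (mem_head x s).
have q0 : 0 <= (`|b x| + 1) / a x by rewrite divr_ge0 // ?addr_ge0 // ltW.
exists (t + (`|b x| + 1) / a x); split; first by rewrite addr_ge0.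
move=> y; rewrite inE => /orP [/eqP -> | ys].
  rewrite mulrDl divfK ?gt_eqF //.
  have := ler_norm (- b x); rewrite normrN => h.
  have : 0 <= t * a x by rewrite mulr_ge0 // ltW.
  lra.
have := Ht y ys; have ay : 0 < a y by apply: H; rewrite inE ys orbT.
have : 0 <= (`|b x| + 1) / a x * a y by rewrite mulr_ge0 // ltW.
rewrite mulrDl; lra.
Qed.
Lemma gordan k n (V : nat -> 'I_k -> rat) :
  (exists lam : nat -> rat, (forall i, 0 <= lam i) /\
     \sum_(0 <= i < n) lam i = 1 /\
     forall j, \sum_(0 <= i < n) lam i * V i j = 0)
  \/ exists d, forall i, (i < n)%N -> 0 < dot d (V i).
Proof.
elim: n V => [|n IH] V.
  by right; exists (fun _ => 0) => i; rewrite ltn0.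
set w := V 0%N; set V' := fun i => V i.+1.
case: (IH V') => [[lam [l0 [l1 lV]]] | [d' Hd']].
  left; exists (fun i => if i is i'.+1 then lam i' else 0); split; first by case.
  split; first by rewrite big_nat_recl //= add0r.
  by move=> j; rewrite big_nat_recl //= mul0r add0r; apply: lV.
case: (ltrP 0 (dot d' w)) => hw.
  by right; exists d' => -[|i] //; rewrite ltnS => /Hd'.
set c := - dot d' w.
have c0 : 0 <= c by rewrite /c oppr_ge0.
set V'' := fun i j => dot d' (V' i) * w j + c * V' i j.
case: (IH V'') => [[lam [l0 [l1 lV]]] | [e He]].
  set al := \sum_(0 <= i < n) lam i * dot d' (V' i).
  have al0 : 0 < al.
    rewrite lt_def; apply/andP; split; last first.
      by rewrite /al big_mkord sumr_ge0 // => i _; rewrite mulr_ge0 // ltW // Hd'.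
    apply/negP => /eqP al0.
    have : \sum_(0 <= i < n) lam i = 0.
      rewrite big_mkord big1 // => i _.
      move: al0; rewrite /al big_mkord => al0.
      have := @psumr_eq0P _ _ xpredT (fun i : 'I_n => lam i * dot d' (V' i))
        (fun i _ => mulr_ge0 (l0 i) (ltW (Hd' _ (ltn_ord i)))) al0 i isT.
      move/eqP.
      by rewrite mulf_eq0 => /orP [/eqP //|]; rewrite gt_eqF // Hd'.
    by rewrite l1 => /eqP; rewrite oner_eq0.
  have ac : al + c != 0 by rewrite gt_eqF // ltr_wpDr.
  left; exists (fun i => if i is i'.+1 then c * lam i' / (al + c) else al / (al + c)).
  split; first by case=> [|i]; rewrite ?divr_ge0 ?mulr_ge0 ?addr_ge0 // ltW.
  split.
    rewrite big_nat_recl //= -big_distrl /= -big_distrr /= l1 mulr1.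
    by rewrite -mulrDl divff.
  move=> j; rewrite big_nat_recl //=.
  have E : al * w j + c * \sum_(0 <= i < n) lam i * V' i j = 0.
    rewrite /al mulr_suml mulr_sumr -big_split /= -[RHS](lV j).
    by apply: eq_bigr => i _; rewrite /V''; ring.
  have -> : \sum_(0 <= i < n) c * lam i / (al + c) * V i.+1 j
         = c / (al + c) * \sum_(0 <= i < n) lam i * V' i j.
    by rewrite mulr_sumr; apply: eq_bigr => i _; rewrite /V'; ring.
  rewrite mulrAC [c / _ * _]mulrAC -mulrDl.
  by rewrite E mul0r.
set ww := dot w w.
have ww0 : 0 <= ww by rewrite /ww /dot sumr_ge0 // => i _; rewrite -expr2 sqr_ge0.
have [wz|wnz] := eqVneq ww 0.
  left; exists (fun i => if i is 0%N then 1 else 0); split; first by case.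
  split; first by rewrite big_nat_recl //= big1 ?addr0.
  move=> j; rewrite big_nat_recl //= big1 ?addr0 => [|i _]; last by rewrite mul0r.
  rewrite mul1r.
  move: wz; rewrite /ww /dot => wz.
  have := @psumr_eq0P _ _ xpredT (fun i => w i * w i)
    (fun i _ => (ltac:(by rewrite /= -expr2 sqr_ge0))) wz j isT.
  by move/eqP; rewrite mulf_eq0 orbb => /eqP.
have wpos : 0 < ww by rewrite lt_def wnz ww0.
set D := fun i => c * e i + dot e w * d' i.
have DV : forall i, (i < n)%N -> 0 < dot D (V' i).
  move=> i lin; rewrite /D dot_linl.
  have := He i lin; rewrite /V'' dot_linr.
  by rewrite [dot e w * _]mulrC [_ * dot e w]mulrC addrC.
have Dw : dot D w = 0 by rewrite /D dot_linl /c; ring.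
have [t [t0 Ht]] := @large _ (iota 0 n) (fun i => dot D (V' i)) (fun i => dot w (V' i))
   (fun i ii => DV i (ltac:(by rewrite mem_iota in ii))).
right; exists (fun j => t * D j + 1 * w j) => -[|i] lin.
  by rewrite dot_linl -/w Dw mulr0 add0r mul1r.
rewrite dot_linl mul1r; apply: Ht; by rewrite mem_iota.
Qed.

Definition pts k n : seq (point k) :=
  [seq p <- [seq [ffun i => nat_of_ord (f i)] | f : {ffun 'I_k -> 'I_n.+1} <- enum {ffun 'I_k -> 'I_n.+1}]
   | ord_pt p == n].

Lemma mem_pts k n (x : point k) : ord_pt x = n -> x \in pts k n.
Proof.
move=> ox; rewrite mem_filter ox eqxx /=; apply/mapP.
exists [ffun i => inord (x i)]; first by rewrite mem_enum.
apply/ffunP => i; rewrite !ffunE inordK // ltnS -ox /ord_pt (bigD1 i) //=.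
exact: leq_addr.
Qed.

Lemma pts_ord k n (x : point k) : x \in pts k n -> ord_pt x = n.
Proof. by rewrite mem_filter => /andP [/eqP]. Qed.

Lemma exmin (R' : realDomainType) (T : eqType) (s : seq T) (f : T -> R') :
  s != [::] -> exists2 z, z \in s & forall p, p \in s -> f z <= f p.
Proof.
elim: s => [|x s IH] // _.
have [->|sn] := eqVneq s [::].
  by exists x => [|p]; rewrite ?mem_head // inE => /eqP ->.
have [z zs zm] := IH sn.
case: (leP (f x) (f z)) => h.
  exists x; first exact: mem_head.
  move=> p; rewrite inE => /orP [/eqP -> //|ps]; exact: le_trans h (zm p ps).
exists z; first by rewrite inE zs orbT.
move=> p; rewrite inE => /orP [/eqP -> |ps]; [exact: ltW | exact: zm].
Qed.

Lemma int_scale k (D : 'I_k -> rat) :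
  exists (M : int) (z : 'I_k -> int), 0 < M /\ forall i, (z i)%:~R = M%:~R * D i.
Proof.
exists (\prod_i denq (D i)), (fun i => numq (D i) * \prod_(j | j != i) denq (D j)).
split; first by apply: prodr_gt0 => i _; exact: denq_gt0.
move=> i; rewrite [in RHS](bigD1 i) //= !intrM numqE; ring.
Qed.

Local Close Scope ring_scope.
Theorem lemma1 (F : realType) (k : nat) (R : region k) (n : nat) :
  2 <= k ->
  simple_region F R ->
  (exists x, level R n x) ->
  (exists y, level (boundary R) n y) ->
  forall C : region k,
    (forall y, C y -> level (boundary R) n y) ->
    (exists y, C y) ->
    exists ybar, C ybar /\
      exists (m : 'I_k -> nat) (b : nat),
        (exists i, m i = 0) /\ (exists i, m i <> 0) /\
        linf m ybar = b /\ ord_pt ybar = n /\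
        (forall x, level R n x -> b.+1 <= linf m x) /\
        (forall y, C y -> y <> ybar -> b.+1 <= linf m y).
Proof.
Local Open Scope ring_scope.
move=> k2 simp [x0 Rx0] _ C Cb [y0 Cy0].
set Rl := undup [seq p <- pts k n | `[< R p >]].
set Cl := [seq p <- pts k n | `[< C p >]].
have memR : forall p, level R n p -> p \in Rl.
  move=> p [Rp op]; rewrite mem_undup mem_filter mem_pts // andbT.
  exact: asboolT.
have Rlv : forall p, p \in Rl -> level R n p.
  move=> p; rewrite mem_undup mem_filter => /andP [/asboolP Rp pp].
  by split => //; apply: pts_ord pp.
have memC : forall p, C p -> p \in Cl.
  move=> p Cp; rewrite mem_filter mem_pts ?andbT; first exact: asboolT.
  by case: (Cb p Cp).
have ClC : forall p, p \in Cl -> C p.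
  by move=> p; rewrite mem_filter => /andP [/asboolP].
have [[nRy0 _] oy0] := Cb y0 Cy0.
set V := fun i (j : 'I_k) => (((nth y0 Rl i) j)%:R - (y0 j)%:R : rat).
case: (gordan (size Rl) V) => [[lam [l0 [l1 lV]]] | [d Hd]].
  exfalso; apply: (simp n y0 oy0 nRy0).
  exists Rl, (fun p => ratr (lam (index p Rl))).
  split; first exact: Rlv.
  split; first by move=> p; rewrite ler0q.
  split.
    rewrite (big_nth y0) -(rmorph1 (@ratr F)) -l1 rmorph_sum.
    apply: eq_big_nat => i /andP [_ ii]; rewrite index_uniq // undup_uniq //.
  move=> i.
  have Ei : \sum_(0 <= j < size Rl) lam j * ((nth y0 Rl j) i)%:R = (y0 i)%:R :> rat.
    have := lV i; rewrite /V.
    under eq_bigr do rewrite mulrBr.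
    rewrite sumrB -mulr_suml l1 mul1r => /eqP; rewrite subr_eq0 => /eqP //.
  rewrite -(ratr_nat F (y0 i)) -Ei rmorph_sum (big_nth y0).
  apply: eq_big_nat => j /andP [_ jj].
  by rewrite index_uniq ?undup_uniq // rmorphM rmorph_nat.
set f := fun p : point k => dot d (fun j => ((p j)%:R : rat)).
have fR : forall r, r \in Rl -> f y0 < f r.
  move=> r rR; have := Hd (index r Rl); rewrite index_mem => /(_ rR).
  rewrite /V nth_index // => h; rewrite /f -subr_gt0 /dot -sumrB.
  by under eq_bigr do rewrite -mulrBr.
set Pl := Rl ++ Cl.
have y0P : y0 \in Pl by rewrite mem_cat memC ?orbT.
have [z1 z1P z1m] := exmin f (ltac:(by case: (Pl) y0P) : Pl != [::]).
set Fl := [seq p <- Pl | f p == f z1].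
set vq := fun (p : point k) (j : 'I_k) => ((p j)%:R : rat).
set g := fun p : point k => - dot (vq p) (vq p).
have z1F : z1 \in Fl by rewrite mem_filter eqxx.
have [z zF zm] := exmin g (ltac:(by case: (Fl) z1F) : Fl != [::]).
move: (zF); rewrite mem_filter => /andP [/eqP fz zP].
have zC : C z.
  move: zP; rewrite mem_cat => /orP [zR|]; last exact: ClC.
  have := fR z zR; have := z1m y0 y0P; rewrite fz.
  by move=> h1 h2; have := lt_le_trans h2 h1; rewrite ltxx.
have [t [t0 Ht]] := @large _ [seq p <- Pl | f p != f z]
   (fun p => f p - f z) (fun p => dot (vq z) (vq z) - dot (vq z) (vq p))
   (ltac:(move=> p; rewrite mem_filter => /andP [fpz pP];
          rewrite subr_gt0 lt_def fpz fz; exact: z1m)).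
set Dv := fun j => t * d j + (-1) * vq z j.
have key : forall p, p \in Pl -> p != z -> dot Dv (vq z) < dot Dv (vq p).
  move=> p pP pz; rewrite -subr_gt0 /Dv !dot_linl.
  have [fpz|fpz] := eqVneq (f p) (f z).
    have pF : p \in Fl by rewrite mem_filter pP fpz fz eqxx.
    have gp := zm p pF; rewrite /g lerN2 in gp.
    have sq : 0 < \sum_j (vq z j - vq p j) * (vq z j - vq p j).
      have [j zj] : exists j, z j != p j.
        apply/existsP; apply: contraR pz; rewrite negb_exists => /forallP h.
        by apply/eqP/ffunP => j; apply/eqP; move: (h j); rewrite negbK eq_sym.
      rewrite (bigD1 j) //=; apply: ltr_wpDr.
        by apply: sumr_ge0 => i _; rewrite -expr2 sqr_ge0.
      rewrite -expr2 lt_def sqr_ge0 andbT expf_eq0 /=.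
      by rewrite subr_eq0 /vq eqr_nat.
    have id2 : 2 * (dot (vq z) (vq z) - dot (vq z) (vq p))
       = dot (vq z) (vq z) - dot (vq p) (vq p) + \sum_j (vq z j - vq p j) * (vq z j - vq p j).
      rewrite /dot -!sumrB mulr_sumr -big_split /=.
      by apply: eq_bigr => i _; ring.
    have : f p - f z = 0 by rewrite fpz subrr.
    rewrite /f -/(vq p) -/(vq z) => /eqP; rewrite subr_eq0 => /eqP ->.
    lra.
  have := Ht p (ltac:(by rewrite mem_filter fpz pP)).
  rewrite /f -/(vq p) -/(vq z) /=.
  lra.
have [M [zz [M0 HM]]] := int_scale Dv.
have i_0 : 'I_k := Ordinal (leq_trans (isT : (0 < 2)%N) k2).
have ek : enum 'I_k != [::].
  by apply/eqP => e; have := mem_enum 'I_k i_0; rewrite e.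
have [i0 _ i0m] := exmin zz ek.
set m := fun j => `|zz j - zz i0|%N.
have mE : forall j, ((m j)%:R : rat) = (zz j)%:~R - (zz i0)%:~R.
  move=> j; rewrite /m -intrB natr_absz ger0_norm // subr_ge0; apply: i0m.
  exact: mem_enum.
have linfE : forall p, ord_pt p = n ->
    ((linf m p)%:R : rat) = M%:~R * dot Dv (vq p) - (zz i0)%:~R * n%:R.
  move=> p op; rewrite /linf natr_sum -op /ord_pt natr_sum mulr_sumr /dot mulr_sumr -sumrB.
  by apply: eq_bigr => j _; rewrite natrM mE HM /vq; ring.
have oz : ord_pt z = n by case: (Cb z zC).
have lt : forall p, p \in Pl -> p != z -> (linf m z < linf m p)%N.
  move=> p pP pz; rewrite -(ltr_nat rat) !linfE //.
    by rewrite ltrD2r ltr_pM2l ?ltr0z // key.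
  move: pP; rewrite mem_cat => /orP [/Rlv [] //|/ClC /Cb [] //].
exists z; split => //.
exists m, (linf m z).
split; first by exists i0; rewrite /m subrr.
split.
  have x0z : x0 != z.
    by apply/eqP => xz; move: Rx0; rewrite xz => -[Rz _]; case: (Cb z zC) => -[nRz _] _.
  have hx := lt x0 (ltac:(by rewrite mem_cat memR)) x0z.
  case: (pselect (exists i, m i <> 0%N)) => // hn; exfalso.
  have m0 : forall i, m i = 0%N.
    by move=> i; case: (eqVneq (m i) 0%N) => // h; case: hn; exists i; apply/eqP.
  move: hx; rewrite /linf !big1 // => i _; by rewrite m0.
split => //; split => //.
split.
  move=> x Rx; apply: lt; first by rewrite mem_cat memR.
  by apply/eqP => xz; move: Rx; rewrite xz => -[Rz _]; case: (Cb z zC) => -[nRz _] _.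
move=> y Cy yz; apply: lt; first by rewrite mem_cat memC ?orbT.
exact/eqP.
Qed.
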